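(* Let $X=x_1x_2\dots$ and $Y=y_1y_2\dots$ be independent i.i.d. sequences uniform on $\{B,b,R,r\}$. Then almost surely, for every $r\ge0$ the combinatorial ball of radius $r$ around the root of $T_+(x_1\dots x_m)\cup T_-(y_1\dots y_m)$ does not depend on $m$ for all sufficiently large $m$; consequently the limit triangulation $T_+(X)\cup T_-(Y)$ is well defined and locally finite, and it has exactly one end.
   Context: Necklace construction (Sheffield). Given a finite word $X=x_1\dots x_n$ in $\{B,b,R,r\}$, build inductively disc triangulations $D_0\subset\dots\subset D_n$ in the closed upper half-plane with blue/red vertices and an active edge with blue endpoint $b_j$ and red endpoint $r_j$; initially non-positive integers are blue, positive integers red, $b_0=0,r_0=1$. Step according to $x_{j+1}$: (B) new blue vertex $b_{j+1}$, triangle $(b_j,r_j,b_{j+1})$, $r_{j+1}=r_j$; (R) new red vertex $r_{j+1}$, triangle $(b_j,r_j,r_{j+1})$, $b_{j+1}=b_j$; (b) $b_{j+1}$ = counterclockwise boundary neighbour of $b_j$ (or $m-1$, adding edge $[m-1,m]$, if $b_j=m\in\mathbb Z$), triangle $(b_{j+1},b_j,r_j)$, $r_{j+1}=r_j$; (r) $r_{j+1}$ = clockwise boundary neighbour of $r_j$ (or $m+1$, adding $[m,m+1]$, if $r_j=m\in\mathbb Z$), triangle $(b_j,r_j,r_{j+1})$, $b_{j+1}=b_j$. $T_+(X)$ is $D_n$ rooted at the first triangle constructed; $T_-(Y)$ is the analogous construction in the lower half-plane; $T_+(\cdot)\cup T_-(\cdot)$ denotes the two pieces glued along the real line, rooted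 at the root of the upper piece. Combinatorial balls: $B_0$ is the root vertex, $B_{r+1}$ is all triangles incident to a vertex of $B_r$ with their vertices and edges. A triangulation has one end if the complement of every finite subgraph has exactly one infinite connected component. *)

(* Defs.v *)
From Stdlib Require Import Reals ZArith List.
Import ListNotations.
Open Scope R_scope.

Inductive letter := LB | Lb | LR | Lr.

(* VZ z : integer vertex on the real line;
   VU j : vertex created (upper piece) at step j+1, i.e. by letter x_{j+1};
   VL j : vertex created (lower piece) at step j+1, i.e. by letter y_{j+1}. *)
Inductive vertex := VZ (z : Z) | VU (n : nat) | VL (n : nat).

Definition triangle := (vertex * vertex * vertex)%type.

(** * Necklace construction (combinatorial)
    The free boundary of D_j (the part off the real line) is a path
    L = lz, (ls reversed), b_j, r_j, (rs), rz = R.  [ls] lists the non-integer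
    vertices strictly left of the active edge, nearest first (its head is b_j
    if non-empty; otherwise b_j = lz); symmetrically for [rs]/[rz]. *)
Record state := mkState { lz : Z; ls : list vertex; rz : Z; rs : list vertex }.

Definition init_state : state := mkState 0%Z [] 1%Z [].

Definition bcur (s : state) : vertex :=
  match ls s with [] => VZ (lz s) | x :: _ => x end.
Definition rcur (s : state) : vertex :=
  match rs s with [] => VZ (rz s) | x :: _ => x end.

Definition step (new : vertex) (x : letter) (s : state) : state * triangle :=
  match x with
  | LB => (mkState (lz s) (new :: ls s) (rz s) (rs s), (bcur s, rcur s, new))
  | LR => (mkState (lz s) (ls s) (rz s) (new :: rs s), (bcur s, rcur s, new))
  | Lb =>
      match ls s with
      | [] => (mkState (lz s - 1)%Z [] (rz s) (rs s),
               (VZ (lz s - 1)%Z, VZ (lz s), rcur s))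
      | b :: l => let s' := mkState (lz s) l (rz s) (rs s) in
                  (s', (bcur s', b, rcur s))
      end
  | Lr =>
      match rs s with
      | [] => (mkState (lz s) (ls s) (rz s + 1)%Z [],
               (bcur s, VZ (rz s), VZ (rz s + 1)%Z))
      | r :: l => let s' := mkState (lz s) (ls s) (rz s) l in
                  (s', (bcur s, r, rcur s'))
      end
  end.

(* State D_n after reading x_1 ... x_n, where x_{j+1} = X j. *)
Fixpoint run (mk : nat -> vertex) (X : nat -> letter) (n : nat) : state :=
  match n with
  | O => init_state
  | S n => fst (step (mk n) (X n) (run mk X n))
  end.

Definition tri_of (mk : nat -> vertex) (X : nat -> letter) (j : nat) : triangle :=
  snd (step (mk j) (X j) (run mk X j)).

Inductive side := Up | Dn.
Definition tid := (side * nat)%type.   (* triangle (Up, j): step j+1 of X *)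

Definition tri (X Y : nat -> letter) (t : tid) : triangle :=
  match t with
  | (Up, j) => tri_of VU X j
  | (Dn, j) => tri_of VL Y j
  end.

Definition has_vert (p : triangle) (v : vertex) : Prop :=
  v = fst (fst p) \/ v = snd (fst p) \/ v = snd p.

(* [Some m]: T_+(x_1..x_m) u T_-(y_1..y_m);  [None]: the limit T_+(X) u T_-(Y). *)
Definition present (m : option nat) (t : tid) : Prop :=
  match m with None => True | Some m => (snd t < m)%nat end.

(* root vertex: b_0 = 0, a vertex of the root triangle *)
Definition root : vertex := VZ 0.

Definition ballT_step (X Y : nat -> letter) (m : option nat)
    (V : vertex -> Prop) (t : tid) : Prop :=
  present m t /\ exists w, V w /\ has_vert (tri X Y t) w.

Fixpoint ballV (X Y : nat -> letter) (m : option nat) (r : nat) : vertex -> Prop :=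
  match r with
  | O => fun v => v = root
  | S r => fun v => ballV X Y m r v \/
        exists t, ballT_step X Y m (ballV X Y m r) t /\ has_vert (tri X Y t) v
  end.

Definition ballT (X Y : nat -> letter) (m : option nat) (r : nat) (t : tid) : Prop :=
  match r with
  | O => False
  | S r => ballT_step X Y m (ballV X Y m r) t
  end.

Definition same_ball (X Y : nat -> letter) (m m' : option nat) (r : nat) : Prop :=
  (forall v, ballV X Y m r v <-> ballV X Y m' r v) /\
  (forall t, ballT X Y m r t <-> ballT X Y m' r t).

Definition isV (X Y : nat -> letter) (v : vertex) : Prop :=
  exists t, has_vert (tri X Y t) v.

Definition locally_finite (X Y : nat -> letter) : Prop :=
  forall v, isV X Y v ->
    exists N, forall t, has_vert (tri X Y t) v -> (snd t < N)%nat.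

Definition adj (X Y : nat -> letter) (u v : vertex) : Prop :=
  u <> v /\ exists t, has_vert (tri X Y t) u /\ has_vert (tri X Y t) v.

Inductive reach (X Y : nat -> letter) (S : list vertex) : vertex -> vertex -> Prop :=
  | reach_refl : forall v, isV X Y v -> ~ In v S -> reach X Y S v v
  | reach_step : forall u v w, reach X Y S u v -> adj X Y v w -> ~ In w S ->
                 reach X Y S u w.

Definition infinite_comp (X Y : nat -> letter) (S : list vertex) (v : vertex) : Prop :=
  reach X Y S v v /\ ~ exists l : list vertex, forall w, reach X Y S v w -> In w l.

Definition one_ended (X Y : nat -> letter) : Prop :=
  forall S : list vertex,
    (exists v, infinite_comp X Y S v) /\
    (forall u v, infinite_comp X Y S u -> infinite_comp X Y S v -> reach X Y S u v).

Definition cyl := (list letter * list letter)%type.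

Definition in_cyl (c : cyl) (X Y : nat -> letter) : Prop :=
  (forall i, (i < length (fst c))%nat -> X i = nth i (fst c) LB) /\
  (forall i, (i < length (snd c))%nat -> Y i = nth i (snd c) LB).

Definition cyl_mass (c : cyl) : R := (/ 4) ^ (length (fst c) + length (snd c)).

(* P is contained in a null set of the law of (X, Y), X, Y independent i.i.d.
   uniform on {B,b,R,r}: covered by countably many cylinders of total mass <= eps *)
Definition null_set (P : (nat -> letter) -> (nat -> letter) -> Prop) : Prop :=
  forall eps : R, eps > 0 ->
    exists C : nat -> cyl,
      (forall X Y, P X Y -> exists i, in_cyl (C i) X Y) /\
      (forall N, sum_f_R0 (fun i => cyl_mass (C i)) N <= eps).

Definition almost_surely (Q : (nat -> letter) -> (nat -> letter) -> Prop) : Prop :=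
  null_set (fun X Y => ~ Q X Y).

(* Main.v *)
Require Import Defs.
From Stdlib Require Import Reals ZArith List Lia Lra Classical ClassicalEpsilon.
Import ListNotations.

Section PartA.
Local Open Scope R_scope.

Lemma C_n0 n : C n 0 = 1.
Proof. unfold C. rewrite Nat.sub_0_r. simpl. field. apply INR_fact_neq_0. Qed.
Lemma C_nn n : C n n = 1.
Proof. unfold C. rewrite Nat.sub_diag. simpl. field. apply INR_fact_neq_0. Qed.
Lemma C_pos n k : 0 < C n k.
Proof. unfold C. apply Rdiv_lt_0_compat. apply INR_fact_lt_0.
  apply Rmult_lt_0_compat; apply INR_fact_lt_0. Qed.

Definition Cb (n k : nat) : R := if Nat.leb k n then C n k else 0.

Lemma Cb_pascal n m : Cb (S n) (S m) = Cb n m + Cb n (S m).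
Proof.
  unfold Cb. destruct (Nat.leb_spec (S m) (S n)); destruct (Nat.leb_spec m n);
  destruct (Nat.leb_spec (S m) n); try lia.
  - rewrite pascal; auto.
  - assert (m = n) by lia. subst. rewrite !C_nn. ring.
  - ring.
Qed.

Fixpoint P (n m : nat) : R := match m with O => 0 | S m' => P n m' + Cb n m' end.

Lemma P1 n m : P (S n) (S m) = P n m + P n (S m).
Proof.
  induction m.
  - simpl. unfold Cb. simpl Nat.leb. cbv iota. rewrite !C_n0. ring.
  - change (P (S n) (S (S m))) with (P (S n) (S m) + Cb (S n) (S m)).
    rewrite IHm, Cb_pascal. simpl. ring.
Qed.

Lemma P2 n m : P (S (S n)) (S m) = P n (m - 1) + 2 * P n m + P n (S m).
Proof.
  rewrite P1. destruct m.
  - change (P (S n) 0) with 0. rewrite (P1 n 0). change (P n (0-1)) with 0. change (P n 0) with 0. ring.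
  - rewrite (P1 n m), (P1 n (S m)). replace (S m - 1)%nat with m by lia. ring.
Qed.

Definition T (L h : nat) : R := P (2*L) (L+h+1) - P (2*L) (L+1-h).

Lemma T0 L : T L 0 = 0.
Proof. unfold T. replace (L+0+1)%nat with (L+1-0)%nat by lia. ring. Qed.

Lemma P_0 m : P 0 (S m) = 1.
Proof. induction m. simpl. unfold Cb; simpl. rewrite C_n0; ring.
  change (P 0 (S (S m))) with (P 0 (S m) + Cb 0 (S m)). rewrite IHm. unfold Cb. simpl. ring. Qed.

Lemma T_base h : (1 <= h)%nat -> T 0 h = 1.
Proof. intros. unfold T. replace (2*0)%nat with 0%nat by lia. replace (0+h+1)%nat with (S h) by lia. replace (0+1-h)%nat with 0%nat by lia. rewrite P_0. simpl. ring. Qed.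

Lemma T_rec L h : (1 <= h)%nat -> T (S L) h = T L (h-1) + 2 * T L h + T L (h+1).
Proof.
  intros Hh. unfold T.
  replace (2 * S L)%nat with (S (S (2*L))) by lia.
  replace (S L + h + 1)%nat with (S (L+h+1)) by lia.
  rewrite P2. replace (L + h + 1 - 1)%nat with (L+h)%nat by lia.
  replace (L + (h-1) + 1)%nat with (L+h)%nat by lia.
  replace (L + (h+1) + 1)%nat with (S (L+h+1))%nat by lia.
  replace (L + 1 - (h-1))%nat with (S L + 1 - h)%nat by lia.
  destruct (Nat.le_gt_cases h (S L)).
  - replace (S L + 1 - h)%nat with (S (L+1-h)) by lia. rewrite P2.
    replace (L + 1 - h - 1)%nat with (L+1-(h+1))%nat by lia.
    replace (S (L + 1 - h)) with (S L + 1 - h)%nat by lia. ring.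
  - replace (S L + 1 - h)%nat with 0%nat by lia.
    replace (L + 1 - (h + 1))%nat with 0%nat by lia.
    replace (L + 1 - h)%nat with 0%nat by lia. simpl. ring.
Qed.

Fixpoint cntH (L h : nat) : nat :=
  match L with
  | O => match h with O => O | _ => 1%nat end
  | S L' => match h with O => O | S h' => (2 * cntH L' h + cntH L' (S h) + cntH L' h')%nat end
  end.

Lemma cntH_T L h : INR (cntH L h) = T L h.
Proof.
  revert h; induction L; intros h.
  - destruct h. simpl. rewrite T0. reflexivity. rewrite T_base by lia. reflexivity.
  - destruct h. simpl. rewrite T0. reflexivity.
    rewrite T_rec by lia. change (cntH (S L) (S h)) with (2 * cntH L (S h) + cntH L (S (S h)) + cntH L h)%nat. rewrite !plus_INR, mult_INR, !IHL.
    replace (S h - 1)%nat with h by lia. replace (S h + 1)%nat with (S (S h)) by lia.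
    simpl (INR 2). ring.
Qed.

Lemma INR2 : INR 2 = 2. Proof. simpl. ring. Qed.
Lemma INR1 : INR 1 = 1. Proof. reflexivity. Qed.

Lemma INR_2L1 L : INR (2*L+1) = 2 * INR L + 1.
Proof. rewrite plus_INR, mult_INR, INR2, INR1; ring. Qed.
Lemma INR_2SL1 L : INR (2*S L+1) = 2 * INR L + 3.
Proof. rewrite plus_INR, mult_INR, INR2, INR1, S_INR; ring. Qed.

Lemma C_step L j : (j < L)%nat -> C (2*L) j <= C (2*L) (S j).
Proof.
  intros H. rewrite pascal_step3 by lia.
  pose proof (C_pos (2*L) j).
  assert (INR (S j) <= INR (2*L - j)) by (apply le_INR; lia).
  assert (0 < INR (S j)) by (apply lt_0_INR; lia).
  assert (1 <= INR (2*L-j) / INR (S j)).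
  { apply (Rmult_le_reg_r (INR (S j))); auto. unfold Rdiv. rewrite Rmult_assoc, Rinv_l by lra. lra. }
  nra.
Qed.

Lemma C_mono L j : (j <= L)%nat -> C (2*L) j <= C (2*L) L.
Proof.
  intros H. remember (L - j)%nat as d. revert j H Heqd. induction d; intros j H E.
  - replace j with L by lia. lra.
  - eapply Rle_trans. apply (C_step L j); lia. apply IHd; lia.
Qed.

Lemma Cb_le L j : Cb (2*L) j <= C (2*L) L.
Proof.
  unfold Cb. destruct (Nat.leb_spec j (2*L)).
  - destruct (Nat.le_gt_cases j L). apply C_mono; auto.
    rewrite pascal_step1 by lia. apply C_mono; lia.
  - left; apply C_pos.
Qed.

Lemma P_diff n a b M : (forall j, Cb n j <= M) -> P n (a+b) - P n a <= INR b * M.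
Proof.
  intros HM. induction b.
  - rewrite Nat.add_0_r. simpl. lra.
  - replace (a + S b)%nat with (S (a+b)) by lia. simpl P. rewrite S_INR.
    specialize (HM (a+b)%nat). lra.
Qed.

Lemma T_bound L h : (h <= L+1)%nat -> T L h <= 2 * INR h * C (2*L) L.
Proof.
  intros H. unfold T. replace (L+h+1)%nat with ((L+1-h) + 2*h)%nat by lia.
  eapply Rle_trans. apply P_diff. intro j; apply Cb_le.
  rewrite mult_INR. simpl (INR 2). lra.
Qed.

Lemma C_central_S L : C (2 * S L) (S L) * INR (S L) = 2 * INR (2*L+1) * C (2*L) L.
Proof.
  unfold C. replace (2 * S L - S L)%nat with (S L) by lia.
  replace (2*L - L)%nat with L by lia.
  replace (2 * S L)%nat with (S (S (2*L))) by lia.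
  change (fact (S (S (2*L)))) with (S (S (2*L)) * fact (S (2*L)))%nat.
  change (fact (S (2*L))) with (S (2*L) * fact (2*L))%nat.
  change (fact (S L)) with (S L * fact L)%nat.
  rewrite !mult_INR. rewrite !S_INR. rewrite !mult_INR. simpl (INR 2).
  rewrite INR_2L1.
  pose proof (INR_fact_neq_0 L). pose proof (INR_fact_neq_0 (2*L)).
  pose proof (pos_INR L).
  field. split; auto. lra.
Qed.

Lemma central L : (C (2*L) L)^2 * INR (2*L+1) <= 16^L.
Proof.
  induction L.
  - simpl. rewrite C_n0. lra.
  - assert (E := C_central_S L). set (c := C (2*L) L) in *. set (c' := C (2 * S L) (S L)) in *.
    assert (HL : 0 < INR (S L)) by (apply lt_0_INR; lia).
    rewrite S_INR in *. 
    rewrite INR_2SL1.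
    rewrite INR_2L1 in *.
    assert (c' = 2 * (2 * INR L + 1) * c / (INR L + 1)) by (rewrite <- E; field; lra).
    rewrite H. simpl (16 ^ S L).
    pose proof (pos_INR L).
    assert (Hk: (2 * (2 * INR L + 1) * c / (INR L + 1)) ^ 2 * (2 * INR L + 3) <= 16 * (c ^ 2 * (2 * INR L + 1))).
    { unfold Rdiv. replace ((2 * (2 * INR L + 1) * c * / (INR L + 1)) ^ 2 * (2 * INR L + 3))
        with (c^2 * (2*INR L+1) * (4 * (2 * INR L + 1) * (2 * INR L + 3) * / (INR L + 1)^2)) by (field; lra).
      rewrite (Rmult_comm 16).
      apply Rmult_le_compat_l. apply Rmult_le_pos. apply pow2_ge_0. lra.
      apply (Rmult_le_reg_r ((INR L + 1)^2)). nra. rewrite Rmult_assoc, Rinv_l by nra. nra. }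
    lra.
Qed.

Lemma small_mass k d : d > 0 -> exists L, (S k <= L)%nat /\ INR (cntH L (S k)) * (/4)^L <= d.
Proof.
  intros Hd.
  destruct (INR_unbounded (4 * (INR (S k))^2 / (d*d) + INR (S k))) as [L HL].
  exists L.
  assert (Hk : 0 < INR (S k)) by (apply lt_0_INR; lia).
  assert (Hq : 0 <= 4 * (INR (S k))^2 / (d*d)).
  { apply Rmult_le_pos. nra. left. apply Rinv_0_lt_compat. nra. }
  split. { apply INR_le. lra. }
  rewrite cntH_T.
  assert (HT := T_bound L (S k)). 
  assert (Hc := central L). set (c := C (2*L) L) in *.
  assert (c0 : 0 < c) by apply C_pos.
  assert (p4 : 0 < (/4)^L) by (apply pow_lt; lra).
  assert (E16 : 16^L = (4^L)^2) by (replace 16 with (4*4) by ring; rewrite Rpow_mult_distr; ring).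
  assert (E4 : (/4)^L * 4^L = 1) by (rewrite <- Rpow_mult_distr; replace (/4*4) with 1 by field; apply pow1).
  set (x := c * (/4)^L).
  assert (Hx : x^2 * INR (2*L+1) <= 1).
  { unfold x. replace ((c * (/4)^L)^2 * INR (2*L+1)) with (c^2 * INR (2*L+1) * ((/4)^L)^2) by ring.
    replace 1 with (16^L * ((/4)^L)^2) by (rewrite E16, <- Rpow_mult_distr, Rmult_comm, E4 ; ring) .
    apply Rmult_le_compat_r. apply pow2_ge_0. auto. }
  assert (HT' : T L (S k) * (/4)^L <= 2 * INR (S k) * x).
  { unfold x. rewrite <- Rmult_assoc. apply Rmult_le_compat_r. lra. apply HT. assert (S k <= L)%nat by (apply INR_le; lra). lia. }
  assert (x0 : 0 < x) by (unfold x; nra).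
  rewrite INR_2L1 in Hx.
  assert (HL2 : 2 * INR L + 1 >= 4 * INR (S k) ^ 2 / (d * d)) by lra.
  assert (Hsq : (2 * INR (S k) * x)^2 <= d^2).
  { replace ((2 * INR (S k) * x)^2) with (4 * INR (S k)^2 * x^2) by ring.
    assert (4 * INR (S k)^2 <= d^2 * (2*INR L + 1)).
    { apply (Rmult_le_reg_r (/ (d*d))). apply Rinv_0_lt_compat; nra.
      replace (d ^ 2 * (2 * INR L + 1) * / (d * d)) with (2 * INR L + 1) by (field; lra). lra. }
    assert (0 <= x^2) by apply pow2_ge_0.
    apply Rle_trans with (d^2 * (2*INR L+1) * x^2). apply Rmult_le_compat_r; auto.
    replace (d^2 * (2*INR L+1) * x^2) with (d^2 * (x^2 * (2*INR L + 1))) by ring.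
    replace (d^2) with (d^2 * 1) at 2 by ring. apply Rmult_le_compat_l. apply pow2_ge_0. auto. }
  assert (2 * INR (S k) * x <= d).
  { apply Rsqr_incr_0_var. rewrite !Rsqr_pow2. exact Hsq. lra. }
  lra.
Qed.

End PartA.

Definition wstate := (nat * nat)%type.
Definition wstep (red : bool) (x : letter) (s : wstate) : wstate :=
  let (a, d) := s in
  match red, x with
  | false, LB | true, LR => (S a, d)
  | false, Lb | true, Lr => match a with O => (O, S d) | S a' => (a', d) end
  | _, _ => (a, d)
  end.
Fixpoint wrun (red : bool) (X : nat -> letter) (n : nat) : wstate :=
  match n with O => (0%nat, 0%nat) | S n => wstep red (X n) (wrun red X n) end.

Lemma run_walk mk X n :
  length (ls (run mk X n)) = fst (wrun false X n) /\
  lz (run mk X n) = (- Z.of_nat (snd (wrun false X n)))%Z /\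
  length (rs (run mk X n)) = fst (wrun true X n) /\
  rz (run mk X n) = (1 + Z.of_nat (snd (wrun true X n)))%Z.
Proof.
  induction n.
  - simpl. lia.
  - cbn [run wrun]. destruct (run mk X n) as [lz0 ls0 rz0 rs0]. cbn [ls lz rs rz] in *.
    destruct (wrun false X n) as [a d]. destruct (wrun true X n) as [a' d'].
    cbn [fst snd] in *. destruct IHn as (H1 & H2 & H3 & H4).
    destruct (X n); cbn [step wstep ls lz rs rz fst snd length].
    + subst. lia.
    + destruct ls0; destruct a; cbn [ls lz rs rz fst snd length] in *; subst; try lia.
    + subst. lia.
    + destruct rs0; destruct a'; cbn [ls lz rs rz fst snd length] in *; subst; try lia.
Qed.

Section Side.
Variable mk : nat -> vertex.
Hypothesis mk_inj : forall i j, mk i = mk j -> i = j.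
Hypothesis mk_Z : forall i z, mk i <> VZ z.
Variable X : nat -> letter.

Notation st n := (run mk X n).

Lemma ls_step n u : In u (ls (st (S n))) -> u = mk n \/ In u (ls (st n)).
Proof.
  simpl. destruct (st n) as [a l b r]. unfold step. destruct (X n); simpl; auto.
  - intros [H|H]; auto.
  - destruct l; simpl; auto.
  - destruct r; simpl; auto.
Qed.
Lemma rs_step n u : In u (rs (st (S n))) -> u = mk n \/ In u (rs (st n)).
Proof.
  simpl. destruct (st n) as [a l b r]. unfold step. destruct (X n); simpl; auto.
  - destruct l; simpl; auto.
  - intros [H|H]; auto.
  - destruct r; simpl; auto.
Qed.

Lemma ls_mk n u : In u (ls (st n)) -> exists j, (j < n)%nat /\ u = mk j.
Proof.
  induction n; simpl; [tauto|]. intros H. apply ls_step in H. destruct H as [H|H].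
  exists n; auto. destruct (IHn H) as (j & ? & ?). exists j; split; auto.
Qed.
Lemma rs_mk n u : In u (rs (st n)) -> exists j, (j < n)%nat /\ u = mk j.
Proof.
  induction n; simpl; [tauto|]. intros H. apply rs_step in H. destruct H as [H|H].
  exists n; auto. destruct (IHn H) as (j & ? & ?). exists j; split; auto.
Qed.

Lemma tri_verts j v : has_vert (tri_of mk X j) v ->
  v = bcur (st j) \/ v = rcur (st j) \/ v = bcur (st (S j)) \/ v = rcur (st (S j)).
Proof.
  unfold tri_of, has_vert. simpl. destruct (st j) as [a l b r]. unfold step, bcur, rcur.
  destruct (X j); simpl; [|destruct l|..|destruct r]; simpl; intuition.
Qed.

Lemma tri_bcur j : has_vert (tri_of mk X j) (bcur (st j)) /\ has_vert (tri_of mk X j) (bcur (st (S j))).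
Proof.
  unfold tri_of, has_vert. simpl. destruct (st j) as [a l b r]. unfold step, bcur, rcur.
  destruct (X j); simpl; [|destruct l|..|destruct r]; simpl; intuition.
Qed.

Definition dB n := snd (wrun false X n).
Definition dR n := snd (wrun true X n).

Lemma dB_step n : dB (S n) = dB n \/ (dB (S n) = S (dB n) /\ ls (st n) = [] /\ X n = Lb).
Proof.
  unfold dB. pose proof (run_walk mk X n) as (H1 & _). simpl.
  destruct (wrun false X n) as [a d]. simpl in *. destruct (X n); simpl; auto.
  destruct a; simpl; auto. right. split; auto. split; auto. destruct (ls (st n)); simpl in *; congruence.
Qed.
Lemma dR_step n : dR (S n) = dR n \/ (dR (S n) = S (dR n) /\ rs (st n) = [] /\ X n = Lr).
Proof.
  unfold dR. pose proof (run_walk mk X n) as (_ & _ & H1 & _). simpl.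
  destruct (wrun true X n) as [a d]. simpl in *. destruct (X n); simpl; auto.
  destruct a; simpl; auto. right. split; auto. split; auto. destruct (rs (st n)); simpl in *; congruence.
Qed.

Lemma dB_mono a n : (a <= n)%nat -> (dB a <= dB n)%nat.
Proof. induction 1; auto. destruct (dB_step m) as [H'|[H' _]]; lia. Qed.
Lemma dR_mono a n : (a <= n)%nat -> (dR a <= dR n)%nat.
Proof. induction 1; auto. destruct (dR_step m) as [H'|[H' _]]; lia. Qed.

Lemma dB_pass a n z : (dB a <= z < dB n)%nat -> exists j, (a <= j < n)%nat /\ dB j = z /\
   ls (st j) = [] /\ X j = Lb.
Proof.
  induction n; intros H.
  - change (dB 0) with 0%nat in H. lia.
  - destruct (Nat.lt_ge_cases z (dB n)).
    + destruct (IHn ltac:(lia)) as (j & ? & ?). exists j; split; auto; lia.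
    + destruct (dB_step n) as [E|(E & E1 & E2)]. lia.
      assert (a <= n)%nat. { destruct (Nat.le_gt_cases a n); auto. pose proof (dB_mono (S n) a). lia. }
      exists n; repeat split; auto; lia.
Qed.
Lemma dR_pass a n z : (dR a <= z < dR n)%nat -> exists j, (a <= j < n)%nat /\ dR j = z /\
   rs (st j) = [] /\ X j = Lr.
Proof.
  induction n; intros H.
  - change (dR 0) with 0%nat in H. lia.
  - destruct (Nat.lt_ge_cases z (dR n)).
    + destruct (IHn ltac:(lia)) as (j & ? & ?). exists j; split; auto; lia.
    + destruct (dR_step n) as [E|(E & E1 & E2)]. lia.
      assert (a <= n)%nat. { destruct (Nat.le_gt_cases a n); auto. pose proof (dR_mono (S n) a). lia. }
      exists n; repeat split; auto; lia.
Qed.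

Hypothesis goodB : forall k, exists n, (k < dB n)%nat.
Hypothesis goodR : forall k, exists n, (k < dR n)%nat.

Lemma lz_eq n : lz (st n) = (- Z.of_nat (dB n))%Z.
Proof. apply (run_walk mk X n). Qed.
Lemma rz_eq n : rz (st n) = (1 + Z.of_nat (dR n))%Z.
Proof. apply (run_walk mk X n). Qed.

Lemma VZ_active a z : (dB a <= z)%nat -> exists j, (a <= j)%nat /\ has_vert (tri_of mk X j) (VZ (- Z.of_nat z)).
Proof.
  intros H. destruct (goodB z) as [n Hn].
  destruct (dB_pass a n z ltac:(lia)) as (j & Hj & E & E1 & E2).
  exists j. split. lia. destruct (tri_bcur j) as [T _].
  unfold bcur in T. rewrite E1, lz_eq, E in T. exact T.
Qed.

Lemma notin_ls i j : (i < j)%nat -> ls (st j) = [] -> forall j', (j <= j')%nat -> ~ In (mk i) (ls (st j')).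
Proof.
  intros Hij E j' H. induction H.
  - rewrite E. simpl; auto.
  - intros Hin. apply ls_step in Hin. destruct Hin as [Hin|Hin]; auto.
    apply mk_inj in Hin. lia.
Qed.
Lemma notin_rs i j : (i < j)%nat -> rs (st j) = [] -> forall j', (j <= j')%nat -> ~ In (mk i) (rs (st j')).
Proof.
  intros Hij E j' H. induction H.
  - rewrite E. simpl; auto.
  - intros Hin. apply rs_step in Hin. destruct Hin as [Hin|Hin]; auto.
    apply mk_inj in Hin. lia.
Qed.

Lemma bcur_fin v : exists N, forall j, (N <= j)%nat -> bcur (st j) <> v.
Proof.
  destruct (Classical_Prop.classic (exists z, v = VZ z)) as [[z ->]|HnZ].
  - destruct (goodB (Z.to_nat (- z))) as [n Hn]. exists n. intros j Hj E.
    unfold bcur in E. destruct (ls (st j)) as [|u l] eqn:El.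
    + injection E as E. rewrite lz_eq in E. pose proof (dB_mono n j Hj). lia.
    + assert (In u (ls (st j))) by (rewrite El; left; auto).
      destruct (ls_mk j u H) as (k & _ & ->). eapply mk_Z; eauto.
  - destruct (Classical_Prop.classic (exists i, v = mk i)) as [[i ->]|Hn].
    + destruct (goodB (dB (S i))) as [n Hn].
      destruct (dB_pass (S i) n (dB (S i)) ltac:(lia)) as (j & Hj & _ & E1 & _).
      exists j. intros j' Hj' E. unfold bcur in E. destruct (ls (st j')) as [|u l] eqn:El.
      * eapply mk_Z; eauto.
      * apply (notin_ls i j ltac:(lia) E1 j' Hj'). rewrite El, E. left; auto.
    + exists 0%nat. intros j _ E. unfold bcur in E. destruct (ls (st j)) as [|u l] eqn:El.
      * apply HnZ; eauto.
      * assert (In u (ls (st j))) by (rewrite El; left; auto).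
        destruct (ls_mk j u H) as (k & _ & ->). apply Hn; eauto.
Qed.

Lemma rcur_fin v : exists N, forall j, (N <= j)%nat -> rcur (st j) <> v.
Proof.
  destruct (Classical_Prop.classic (exists z, v = VZ z)) as [[z ->]|HnZ].
  - destruct (goodR (Z.to_nat z)) as [n Hn]. exists n. intros j Hj E.
    unfold rcur in E. destruct (rs (st j)) as [|u l] eqn:El.
    + injection E as E. rewrite rz_eq in E. pose proof (dR_mono n j Hj). lia.
    + assert (In u (rs (st j))) by (rewrite El; left; auto).
      destruct (rs_mk j u H) as (k & _ & ->). eapply mk_Z; eauto.
  - destruct (Classical_Prop.classic (exists i, v = mk i)) as [[i ->]|Hn].
    + destruct (goodR (dR (S i))) as [n Hn].
      destruct (dR_pass (S i) n (dR (S i)) ltac:(lia)) as (j & Hj & _ & E1 & _).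
      exists j. intros j' Hj' E. unfold rcur in E. destruct (rs (st j')) as [|u l] eqn:El.
      * eapply mk_Z; eauto.
      * apply (notin_rs i j ltac:(lia) E1 j' Hj'). rewrite El, E. left; auto.
    + exists 0%nat. intros j _ E. unfold rcur in E. destruct (rs (st j)) as [|u l] eqn:El.
      * apply HnZ; eauto.
      * assert (In u (rs (st j))) by (rewrite El; left; auto).
        destruct (rs_mk j u H) as (k & _ & ->). apply Hn; eauto.
Qed.

Lemma side_fin v : exists N, forall j, (N <= j)%nat -> ~ has_vert (tri_of mk X j) v.
Proof.
  destruct (bcur_fin v) as [N1 H1]. destruct (rcur_fin v) as [N2 H2].
  exists (N1 + N2)%nat. intros j Hj Hv. apply tri_verts in Hv.
  destruct Hv as [E|[E|[E|E]]]; symmetry in E.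
  - apply (H1 j); auto; lia.
  - apply (H2 j); auto; lia.
  - apply (H1 (S j)); auto; lia.
  - apply (H2 (S j)); auto; lia.
Qed.
End Side.

Lemma VU_inj : forall i j, VU i = VU j -> i = j. Proof. congruence. Qed.
Lemma VL_inj : forall i j, VL i = VL j -> i = j. Proof. congruence. Qed.
Lemma VU_Z : forall i z, VU i <> VZ z. Proof. congruence. Qed.
Lemma VL_Z : forall i z, VL i <> VZ z. Proof. congruence. Qed.

Definition verts (p : Defs.triangle) : list vertex := [fst (fst p); snd (fst p); snd p].
Lemma verts_in p v : has_vert p v -> In v (verts p).
Proof. unfold has_vert, verts. simpl. intuition. Qed.

Section Graph.
Variables X Y : nat -> letter.
Hypothesis gbX : forall k, exists n, (k < dB X n)%nat.
Hypothesis grX : forall k, exists n, (k < dR X n)%nat.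
Hypothesis gbY : forall k, exists n, (k < dB Y n)%nat.
Hypothesis grY : forall k, exists n, (k < dR Y n)%nat.

Lemma LF v : exists N, forall t, has_vert (tri X Y t) v -> (snd t < N)%nat.
Proof.
  destruct (side_fin VU VU_inj VU_Z X gbX grX v) as [N1 H1].
  destruct (side_fin VL VL_inj VL_Z Y gbY grY v) as [N2 H2].
  exists (N1 + N2)%nat. intros [[|] j] H; simpl in *.
  - destruct (Nat.lt_ge_cases j (N1+N2)); auto. exfalso; apply (H1 j); auto; lia.
  - destruct (Nat.lt_ge_cases j (N1+N2)); auto. exfalso; apply (H2 j); auto; lia.
Qed.

Lemma LF_list l : exists N, forall v t, In v l -> has_vert (tri X Y t) v -> (snd t < N)%nat.
Proof.
  induction l as [|a l IH].
  - exists 0%nat. simpl; tauto.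
  - destruct IH as [N HN]. destruct (LF a) as [M HM]. exists (N+M)%nat.
    intros v t [E|E] Hv. subst. specialize (HM t Hv). lia. specialize (HN v t E Hv). lia.
Qed.

Definition oldv (N : nat) : list vertex :=
  flat_map (fun j => verts (tri X Y (Up, j)) ++ verts (tri X Y (Dn, j))) (seq 0 N).

Lemma oldv_in N t v : (snd t < N)%nat -> has_vert (tri X Y t) v -> In v (oldv N).
Proof.
  intros Ht Hv. unfold oldv. apply in_flat_map. destruct t as [s j]. exists j. split.
  apply in_seq. simpl in *; lia. apply in_or_app. destruct s; [left|right]; apply verts_in; auto.
Qed.

Lemma ball_stab r : exists l, (forall v, ballV X Y None r v -> In v l) /\
  exists M, forall m, (M <= m)%nat ->
    (forall v, ballV X Y (Some m) r v <-> ballV X Y None r v) /\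
    (forall t, ballT X Y (Some m) r t <-> ballT X Y None r t).
Proof.
  induction r.
  - exists [root]. split. simpl. intros v ->; auto.
    exists 0%nat. intros m _. simpl. split; tauto.
  - destruct IHr as (l & Hl & M & HM). destruct (LF_list l) as [N HN].
    assert (key : forall m, (M + N <= m)%nat -> forall t,
      ballT_step X Y (Some m) (ballV X Y (Some m) r) t <-> ballT_step X Y None (ballV X Y None r) t).
    { intros m Hm t. destruct (HM m ltac:(lia)) as [HV _]. unfold ballT_step. simpl. split.
      - intros [_ (w & Hw & Ht)]. split; auto. exists w. split; auto. apply HV; auto.
      - intros [_ (w & Hw & Ht)]. split. specialize (HN w t (Hl w Hw) Ht). lia.
        exists w. split; auto. apply HV; auto. }
    exists (l ++ oldv N). split.
    + intros v [Hv|(t & Ht & Hv)].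
      * apply in_or_app; left; auto.
      * apply in_or_app; right. destruct Ht as [_ (w & Hw & Hwt)].
        apply (oldv_in N t); auto. apply (HN w t); auto.
    + exists (M + N)%nat. intros m Hm. destruct (HM m ltac:(lia)) as [HV _]. split.
      * intros v. simpl. rewrite HV. split; intros [A|(t & Ht & Hv)]; auto; right; exists t; split; auto;
        apply (key m Hm); auto.
      * intros t. simpl. apply key; auto.
Qed.

Lemma balls r : exists M : nat, forall m : nat, (M <= m)%nat ->
        same_ball X Y (Some m) (Some M) r /\ same_ball X Y (Some m) None r.
Proof.
  destruct (ball_stab r) as (_ & _ & M & HM). exists M. intros m Hm.
  destruct (HM m Hm) as [A B]. destruct (HM M (le_n _)) as [C D].
  unfold same_ball. split; split; intros; [rewrite A, C|rewrite B, D|rewrite A|rewrite B]; tauto.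
Qed.

Lemma locfin : locally_finite X Y.
Proof. intros v _. apply LF. Qed.

Lemma adj_sym u v : adj X Y u v -> adj X Y v u.
Proof. intros [H (t & A & B)]. split; auto. exists t; auto. Qed.

Lemma reach_ends S u v : reach X Y S u v -> isV X Y u /\ ~ In u S /\ isV X Y v /\ ~ In v S.
Proof.
  induction 1; auto. intuition. destruct H0 as [_ (t & _ & Ht)]. exists t; auto.
Qed.

Lemma reach_trans S u v w : reach X Y S u v -> reach X Y S v w -> reach X Y S u w.
Proof. intros H1 H2. revert H1. induction H2; intros; auto. apply reach_step with v; auto. Qed.

Lemma reach_pre S u v w : reach X Y S v w -> adj X Y u v -> isV X Y u -> ~ In u S -> reach X Y S u w.
Proof.
  induction 1; intros.
  - eapply reach_step; eauto. apply reach_refl; auto.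
  - eapply reach_step; eauto.
Qed.

Lemma reach_sym S u v : reach X Y S u v -> reach X Y S v u.
Proof.
  induction 1. apply reach_refl; auto.
  apply (reach_pre S w v u); auto. apply adj_sym; auto.
  destruct H0 as [_ (t & _ & Ht)]. exists t; auto.
Qed.

Lemma vertex_dec (u v : vertex) : {u = v} + {u <> v}.
Proof. decide equality; try apply Z.eq_dec; apply Nat.eq_dec. Qed.

Lemma same_tri S t u v : has_vert (tri X Y t) u -> has_vert (tri X Y t) v ->
  ~ In u S -> ~ In v S -> reach X Y S u v.
Proof.
  intros Hu Hv Su Sv. assert (isV X Y u) by (exists t; auto).
  destruct (vertex_dec u v) as [->|Hne]. apply reach_refl; auto.
  eapply reach_step. apply reach_refl; auto. split; auto. exists t; auto. auto.
Qed.

Definition act (n : nat) (v : vertex) := exists t, (n <= snd t)%nat /\ has_vert (tri X Y t) v.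

Definition hub n := bcur (run VU X n).

Lemma side_conn n S (HS : forall s, In s S -> ~ act n s) (sd : side) (mk : nat -> vertex) Z0
  (E : forall j, tri X Y (sd, j) = tri_of mk Z0 j) :
  forall m, (n <= m)%nat -> forall v, has_vert (tri X Y (sd, m)) v -> reach X Y S v (bcur (run mk Z0 n)).
Proof.
  assert (NS : forall m v, (n <= m)%nat -> has_vert (tri X Y (sd, m)) v -> ~ In v S).
  { intros m v Hm Hv Hin. apply (HS v Hin). exists (sd, m); auto. }
  assert (Hb : forall m, (n <= m)%nat -> reach X Y S (bcur (run mk Z0 m)) (bcur (run mk Z0 n))).
  { intros m Hm. induction Hm.
    - destruct (tri_bcur mk Z0 n) as [A _]. rewrite <- E in A. apply reach_refl. exists (sd, n); auto.
      eapply NS; eauto.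
    - destruct (tri_bcur mk Z0 m) as [A B]. rewrite <- E in A, B.
      eapply reach_trans; [|exact IHHm]. apply (same_tri S (sd, m)); auto; eapply NS; eauto; lia. }
  intros m Hm v Hv. eapply reach_trans; [|apply (Hb m Hm)].
  destruct (tri_bcur mk Z0 m) as [A _]. rewrite <- E in A.
  apply (same_tri S (sd, m)); auto; eapply NS; eauto.
Qed.

Lemma conn n S (HS : forall s, In s S -> ~ act n s) v : act n v -> reach X Y S v (hub n).
Proof.
  intros ([sd m] & Hm & Hv). simpl in Hm.
  set (z := (dB X n + dB Y n)%nat).
  destruct (VZ_active VU VU_inj X gbX n z ltac:(unfold z; lia)) as (j1 & Hj1 & T1).
  destruct (VZ_active VL VL_inj Y gbY n z ltac:(unfold z; lia)) as (j2 & Hj2 & T2).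
  assert (RU : reach X Y S (VZ (- Z.of_nat z)) (hub n)).
  { apply (side_conn n S HS Up VU X (fun j => eq_refl) j1); auto. }
  assert (RD : reach X Y S (VZ (- Z.of_nat z)) (bcur (run VL Y n))).
  { apply (side_conn n S HS Dn VL Y (fun j => eq_refl) j2); auto. }
  destruct sd.
  - apply (side_conn n S HS Up VU X (fun j => eq_refl) m); auto.
  - eapply reach_trans. apply (side_conn n S HS Dn VL Y (fun j => eq_refl) m); auto.
    eapply reach_trans. apply reach_sym; exact RD. exact RU.
Qed.

Fixpoint sumabs (l : list vertex) : nat :=
  match l with [] => 0 | VZ w :: l => (Z.abs_nat w + sumabs l)%nat | _ :: l => sumabs l end.
Lemma sumabs_in l w : In (VZ w) l -> (Z.abs_nat w <= sumabs l)%nat.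
Proof. induction l as [|a l IH]; simpl; [tauto|]. intros [->|H]. lia. destruct a; specialize (IH H); lia. Qed.

Lemma act_inf n l : exists v, act n v /\ ~ In v l.
Proof.
  set (z := (dB X n + S (sumabs l))%nat).
  destruct (VZ_active VU VU_inj X gbX n z ltac:(unfold z; lia)) as (j1 & Hj1 & T1).
  exists (VZ (- Z.of_nat z)). split. exists (Up, j1); auto.
  intros H. apply sumabs_in in H. unfold z in H. lia.
Qed.

Lemma oneend : one_ended X Y.
Proof.
  intros S. destruct (LF_list S) as [n Hn].
  assert (HS : forall s, In s S -> ~ act n s).
  { intros s Hs (t & Ht & Hv). specialize (Hn s t Hs Hv). lia. }
  assert (actV : forall v, act n v -> isV X Y v /\ ~ In v S).
  { intros v (t & Ht & Hv). split. exists t; auto. intros Hin. apply (HS v Hin). exists t; auto. }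
  split.
  - destruct (act_inf n []) as [v [Hv _]]. exists v. split.
    + destruct (actV v Hv). apply reach_refl; auto.
    + intros [l Hl]. destruct (act_inf n l) as [w [Hw Hwl]]. apply Hwl, Hl.
      eapply reach_trans. apply conn; auto. apply reach_sym, conn; auto.
  - assert (far : forall u, infinite_comp X Y S u -> reach X Y S u (hub n)).
    { intros u [Hu Hinf]. destruct (classic (exists w, reach X Y S u w /\ ~ In w (oldv n))) as [(w & Hw & Hwo)|Hno].
      - eapply reach_trans. exact Hw. apply conn; auto.
        destruct (reach_ends S u w Hw) as (_ & _ & (t & Ht) & _). exists t. split; auto.
        destruct (Nat.le_gt_cases n (snd t)); auto. exfalso. apply Hwo. eapply oldv_in; eauto.
      - exfalso. apply Hinf. exists (oldv n). intros w Hw.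
        destruct (classic (In w (oldv n))); auto. exfalso; apply Hno; eauto. }
    intros u v Hu Hv. eapply reach_trans. apply far; auto. apply reach_sym, far; auto.
Qed.

End Graph.

Definition letters := [LB; Lb; LR; Lr].
Fixpoint allw (L : nat) : list (list letter) :=
  match L with O => [[]] | S L => flat_map (fun x => map (cons x) (allw L)) letters end.

Lemma allw_len L w : In w (allw L) -> length w = L.
Proof.
  revert w; induction L; cbn [allw]; intros w H.
  - destruct H as [<-|[]]; auto.
  - apply in_flat_map in H. destruct H as (x & _ & H). apply in_map_iff in H.
    destruct H as (w' & <- & H). simpl. f_equal; auto.
Qed.
Lemma allw_in L w : length w = L -> In w (allw L).
Proof.
  revert w; induction L; intros w H.
  - destruct w; simpl in *; auto; lia.
  - destruct w as [|x w]; simpl in H; [lia|]. cbn [allw]. apply in_flat_map. exists x. split.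
    destruct x; simpl; auto. apply in_map. apply IHL. lia.
Qed.

Fixpoint wrunl (red : bool) (s : wstate) (w : list letter) : wstate :=
  match w with [] => s | x :: w => wrunl red (wstep red x s) w end.
Definition surv red k s w := Nat.leb (snd (wrunl red s w)) k.
Definition height (k : nat) (s : wstate) : nat :=
  let (a, d) := s in if Nat.leb d k then (a + (S k - d))%nat else 0%nat.

Lemma filter_map_len {A B} (f : B -> bool) (g : A -> B) l :
  length (filter f (map g l)) = length (filter (fun y => f (g y)) l).
Proof. induction l; simpl; auto. destruct (f (g a)); simpl; auto. Qed.

Lemma cntH_0 L : cntH L 0 = 0%nat.
Proof. destruct L; reflexivity. Qed.

Definition hnext (red : bool) (x : letter) (h : nat) : nat :=
  match red, x with
  | false, LB | true, LR => match h with O => O | S _ => S h end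
  | false, Lb | true, Lr => pred h
  | _, _ => h end.

Lemma hstep red k x s : height k (wstep red x s) = hnext red x (height k s).
Proof.
  destruct s as [a d]. unfold height.
  destruct red, x, a as [|a']; cbn [wstep hnext];
  destruct (Nat.leb_spec d k); try destruct (Nat.leb_spec (S d) k); try lia;
  repeat match goal with |- context [match ?e with O => _ | S _ => _ end] => destruct e eqn:? end; lia.
Qed.

Lemma count red k L s : length (filter (surv red k s) (allw L)) = cntH L (height k s).
Proof.
  revert s; induction L; intros s.
  - destruct s as [a d]. cbn [allw filter]. unfold surv, height. cbn [wrunl snd].
    destruct (Nat.leb_spec d k); cbn [length].
    + destruct (a + (S k - d))%nat eqn:E; [lia|]. reflexivity.
    + reflexivity.
  - cbn [allw flat_map letters]. rewrite !filter_app, !length_app, !filter_map_len.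
    change (fun y => surv red k s (LB :: y)) with (surv red k (wstep red LB s)).
    change (fun y => surv red k s (Lb :: y)) with (surv red k (wstep red Lb s)).
    change (fun y => surv red k s (LR :: y)) with (surv red k (wstep red LR s)).
    change (fun y => surv red k s (Lr :: y)) with (surv red k (wstep red Lr s)).
    cbn [filter length].
    rewrite !IHL, !hstep. destruct (height k s) as [|h].
    + destruct red; simpl; rewrite !cntH_0; auto.
    + destruct red; cbn [hnext]; simpl pred; cbn [cntH]; lia.
Qed.

Open Scope R_scope.

Definition pref (X : nat -> letter) L := map X (seq 0 L).

Lemma pref_len X L : length (pref X L) = L.
Proof. unfold pref. rewrite length_map, length_seq. auto. Qed.

Lemma nth_pref X L i : (i < L)%nat -> nth i (pref X L) LB = X i.
Proof.
  intros H. unfold pref. rewrite (nth_indep _ LB (X 0%nat)) by (rewrite length_map, length_seq; auto).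
  rewrite map_nth, seq_nth by auto. auto.
Qed.

Lemma wrunl_app red s w x : wrunl red s (w ++ [x]) = wstep red x (wrunl red s w).
Proof. revert s; induction w; simpl; auto. Qed.

Lemma wrunl_pref red X L : wrunl red (0%nat,0%nat) (pref X L) = wrun red X L.
Proof.
  induction L; auto. unfold pref. rewrite seq_S, map_app. simpl.
  rewrite wrunl_app. fold (pref X L). rewrite IHL. auto.
Qed.

Definition listmass (l : list cyl) : R := fold_right (fun c a => cyl_mass c + a) 0 l.

Lemma listmass_app l1 l2 : listmass (l1 ++ l2) = listmass l1 + listmass l2.
Proof. induction l1; simpl; [ring|]. rewrite IHl1; ring. Qed.

Lemma cyl_mass_pos c : 0 <= cyl_mass c.
Proof. unfold cyl_mass. left. apply pow_lt. lra. Qed.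
Lemma listmass_pos l : 0 <= listmass l.
Proof. induction l; simpl. lra. pose proof (cyl_mass_pos a). lra. Qed.

Lemma mass_words (side : bool) L ws : (forall w, In w ws -> length w = L) ->
  listmass (map (fun w => if side then ([], w) else (w, [])) ws) = INR (length ws) * (/4)^L.
Proof.
  induction ws as [|w ws IH]; intros H; unfold listmass in *; cbn [map fold_right length]. simpl; ring.
  rewrite IH by (intros; apply H; simpl; auto). rewrite S_INR.
  unfold cyl_mass. destruct side; simpl; rewrite H by (left; auto); rewrite ?Nat.add_0_r; ring.
Qed.

Definition dW red (Z : nat -> letter) n := snd (wrun red Z n).

Lemma walk_cover red (side : bool) k d : d > 0 -> exists l,
  (forall X Y, (forall n, (dW red (if side then Y else X) n <= k)%nat) -> exists c, In c l /\ in_cyl c X Y) /\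
  listmass l <= d.
Proof.
  intros Hd. destruct (small_mass k d Hd) as (L & _ & HL).
  set (ws := filter (surv red k (0%nat,0%nat)) (allw L)).
  exists (map (fun w => if side then ([], w) else (w, [])) ws). split.
  - intros X Y HB. exists (if side then ([], pref Y L) else (pref X L, [])). split.
    + assert (Hw : In (pref (if side then Y else X) L) ws).
      { unfold ws. apply filter_In. split. apply allw_in, pref_len.
      unfold surv. rewrite wrunl_pref. apply Nat.leb_le. apply HB. }
      apply in_map with (f := fun w => if side then ([], w) else (w, [])) in Hw. destruct side; exact Hw.
    + unfold in_cyl. destruct side; simpl; split; intros i Hi; simpl in Hi; try lia;
      rewrite pref_len in Hi; rewrite nth_pref; auto.
  - rewrite (mass_words side L). unfold ws. rewrite count. exact HL.
    intros w Hw. unfold ws in Hw. apply filter_In in Hw. apply allw_len. tauto.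
Qed.

Fixpoint FL (l' : nat -> list cyl) (n : nat) : list cyl :=
  match n with O => [] | S n => FL l' n ++ l' n end.

Lemma sum_shift f N : sum_f_R0 f (S N) = f 0%nat + sum_f_R0 (fun i => f (S i)) N.
Proof. induction N. simpl. ring. change (sum_f_R0 f (S (S N))) with (sum_f_R0 f (S N) + f (S (S N))).
  rewrite IHN. simpl. ring. Qed.

Definition dflt : cyl := ([], []).

Lemma sum_nth_le l N : (N < length l)%nat -> sum_f_R0 (fun i => cyl_mass (nth i l dflt)) N <= listmass l.
Proof.
  revert N; induction l as [|c l IH]; intros N H; simpl in H; [lia|].
  destruct N.
  - simpl. pose proof (listmass_pos l). lra.
  - rewrite sum_shift. simpl. specialize (IH N ltac:(lia)). lra.
Qed.

Section FC.
Variable l' : nat -> list cyl.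
Variable eps : R.
Hypothesis ne : forall K, l' K <> [].
Hypothesis lm : forall K, listmass (l' K) <= eps * (/2)^(S K).

Lemma FL_len n : (n <= length (FL l' n))%nat.
Proof. induction n; simpl; auto. rewrite length_app. destruct (l' n) eqn:E. exfalso; eapply ne; eauto. simpl. lia. Qed.

Lemma FL_prefix n n' : (n <= n')%nat -> exists r, FL l' n' = FL l' n ++ r.
Proof. induction 1. exists []. rewrite app_nil_r; auto. destruct IHle as [r Hr]. exists (r ++ l' m). simpl. rewrite Hr, app_assoc. auto. Qed.

Definition Cv i := nth i (FL l' (S i)) dflt.

Lemma Cv_eq n i : (i < length (FL l' n))%nat -> Cv i = nth i (FL l' n) dflt.
Proof.
  intros H. unfold Cv. destruct (Nat.le_gt_cases (S i) n).
  - destruct (FL_prefix _ _ H0) as [r ->]. rewrite app_nth1; auto. pose proof (FL_len (S i)). lia.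
  - destruct (FL_prefix n (S i) ltac:(lia)) as [r ->]. rewrite app_nth1; auto.
Qed.

Lemma FL_mass n : listmass (FL l' n) <= eps * (1 - (/2)^n).
Proof.
  induction n; simpl. lra. rewrite listmass_app. specialize (lm n). simpl in lm. lra.
Qed.

Lemma flat_cover : (forall K c, In c (l' K) -> exists i, Cv i = c) /\
  (forall N, sum_f_R0 (fun i => cyl_mass (Cv i)) N <= eps).
Proof.
  split.
  - intros K c Hc. destruct (In_nth _ _ dflt Hc) as (q & Hq & E).
    exists (length (FL l' K) + q)%nat. rewrite (Cv_eq (S K)).
    + simpl. rewrite app_nth2 by lia. replace (length (FL l' K) + q - length (FL l' K))%nat with q by lia. auto.
    + simpl. rewrite length_app. lia.
  - intros N. assert (E : sum_f_R0 (fun i => cyl_mass (Cv i)) N = sum_f_R0 (fun i => cyl_mass (nth i (FL l' (S N)) dflt)) N).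
    { apply sum_eq. intros i Hi. rewrite (Cv_eq (S N)); auto. pose proof (FL_len (S N)). lia. }
    rewrite E. eapply Rle_trans. apply sum_nth_le. pose proof (FL_len (S N)). lia.
    eapply Rle_trans. apply FL_mass. assert (0 < (/2)^(S N)) by (apply pow_lt; lra).
    assert (0 <= eps). { specialize (lm 0%nat). pose proof (listmass_pos (l' 0%nat)). simpl in lm. lra. }
    nra.
Qed.
End FC.

Lemma small_pow x : x > 0 -> exists N, (/4)^N <= x.
Proof.
  intros Hx. destruct (pow_lt_1_zero (/4) ltac:(rewrite Rabs_pos_eq; lra) x Hx) as [N HN].
  exists N. specialize (HN N (le_n _)). rewrite Rabs_pos_eq in HN. lra. left; apply pow_lt; lra.
Qed.

Lemma null_union (Q : (nat -> letter) -> (nat -> letter) -> Prop)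
  (P : nat -> (nat -> letter) -> (nat -> letter) -> Prop) :
  (forall K d, d > 0 -> exists l, (forall X Y, P K X Y -> exists c, In c l /\ in_cyl c X Y) /\ listmass l <= d) ->
  (forall X Y, Q X Y -> exists K, P K X Y) -> null_set Q.
Proof.
  intros HP HQ eps He.
  assert (pos : forall K, eps * (/2)^(S (S K)) > 0).
  { intros K. apply Rmult_gt_0_compat; auto. apply pow_lt; lra. }
  pose (lc K := proj1_sig (constructive_indefinite_description _ (HP K _ (pos K)))).
  pose (nd K := proj1_sig (constructive_indefinite_description _ (small_pow _ (pos K)))).
  pose (l' K := (repeat LB (nd K), @nil letter) :: lc K).
  assert (ne : forall K, l' K <> []) by (intros K; unfold l'; discriminate).
  assert (lm : forall K, listmass (l' K) <= eps * (/2)^(S K)).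
  { intros K. unfold l'. simpl. unfold lc, nd.
    destruct (constructive_indefinite_description _ (HP K _ (pos K))) as [l [Hl0 Hl]].
    destruct (constructive_indefinite_description _ (small_pow _ (pos K))) as [n Hn]. simpl.
    unfold cyl_mass. simpl. rewrite repeat_length, Nat.add_0_r.
    assert (E2 : eps * (/2)^(S (S K)) = /2 * (eps * (/2 * (/2)^K))) by (simpl; field). rewrite E2 in Hl, Hn.
    simpl in Hl, Hn. simpl. lra. }
  destruct (flat_cover l' eps ne lm) as [Hc Hs].
  exists (Cv l'). split; auto.
  intros X Y HXY. destruct (HQ X Y HXY) as [K HK].
  assert (Hin : exists c, In c (lc K) /\ in_cyl c X Y).
  { unfold lc. destruct (constructive_indefinite_description _ (HP K _ (pos K))) as [l [Hl Hl1]]. simpl. auto. }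
  destruct Hin as (c & Hc1 & Hc2). destruct (Hc K c) as [i Hi]. unfold l'; right; auto.
  exists i. rewrite Hi. auto.
Qed.

Lemma unb_or red Z : (forall k, exists n, (k < dW red Z n)%nat) \/ exists K, forall n, (dW red Z n <= K)%nat.
Proof.
  destruct (classic (forall k, exists n, (k < dW red Z n)%nat)) as [H|H]; auto. right.
  apply not_all_ex_not in H. destruct H as [K HK]. exists K. intros n.
  destruct (Nat.le_gt_cases (dW red Z n) K); auto. exfalso; apply HK; eauto.
Qed.

Theorem mainTheorem14 :
  almost_surely (fun X Y =>
    (forall r : nat, exists M : nat, forall m : nat, (M <= m)%nat ->
        same_ball X Y (Some m) (Some M) r /\ same_ball X Y (Some m) None r) /\
    locally_finite X Y /\
    one_ended X Y).
Proof.
  unfold almost_surely.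
  apply (null_union _ (fun K X Y => (forall n, (dW false X n <= K)%nat) \/ (forall n, (dW true X n <= K)%nat) \/
     (forall n, (dW false Y n <= K)%nat) \/ (forall n, (dW true Y n <= K)%nat))).
  - intros K d Hd.
    destruct (walk_cover false false K (d/4) ltac:(lra)) as (l1 & C1 & M1).
    destruct (walk_cover true false K (d/4) ltac:(lra)) as (l2 & C2 & M2).
    destruct (walk_cover false true K (d/4) ltac:(lra)) as (l3 & C3 & M3).
    destruct (walk_cover true true K (d/4) ltac:(lra)) as (l4 & C4 & M4).
    exists (l1 ++ l2 ++ l3 ++ l4). split.
    + intros X Y [H|[H|[H|H]]].
      * destruct (C1 X Y H) as (c & ? & ?). exists c. split; auto. apply in_or_app; auto.
      * destruct (C2 X Y H) as (c & ? & ?). exists c. split; auto. apply in_or_app; right; apply in_or_app; auto.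
      * destruct (C3 X Y H) as (c & ? & ?). exists c. split; auto. apply in_or_app; right; apply in_or_app; right; apply in_or_app; auto.
      * destruct (C4 X Y H) as (c & ? & ?). exists c. split; auto. apply in_or_app; right; apply in_or_app; right; apply in_or_app; auto.
    + rewrite !listmass_app. lra.
  - intros X Y Hn.
    destruct (unb_or false X) as [g1|[K ?]]; [|exists K; tauto].
    destruct (unb_or true X) as [g2|[K ?]]; [|exists K; tauto].
    destruct (unb_or false Y) as [g3|[K ?]]; [|exists K; tauto].
    destruct (unb_or true Y) as [g4|[K ?]]; [|exists K; tauto].
    exfalso. apply Hn. split; [|split].
    + apply (balls X Y g1 g2 g3 g4).
    + apply (locfin X Y g1 g2 g3 g4).
    + apply (oneend X Y g1 g2 g3 g4).
Qed.
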